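(* With $a,b,c,g_0,\boldsymbol\mu,k,h$ as below attached to a bounding triple $(W,g,V)\in BT_n$, one has $2k-a-b-h\ge0$.
   Context: $\mathbb{F}_q^\infty$ has basis $e_1,e_2,\dots$; $\mathbb{F}_q^n=\mathrm{span}\{e_1,\dots,e_n\}$; $GL_\infty(\mathbb{F}_q)=\varinjlim GL_n(\mathbb{F}_q)$ under $g\mapsto\operatorname{diag}(g,\mathrm{Id})$. A subspace is smooth if it contains $e_i$ for all large $i$. A bounding triple is $(W,g,V)$ with $W,V$ smooth, $g\in GL_\infty(\mathbb{F}_q)$ acting as identity on $V$, $g^T$ acting as identity on $W$; $BT_n$: those with $e_{n+1},e_{n+2},\dots\in V\cap W$. $GL_\infty(\mathbb{F}_q)$ acts by $x\cdot(W,g,V)=(x^{-T}W,xgx^{-1},xV)$. With $\langle e_i,e_j\rangle=\delta_{ij}$, $W^\perp=\{v:\langle W,v\rangle=0\}$, $V^\perp=\{w:\langle w,V\rangle=0\}$, put $a=\dim(W\cap V^\perp)$, $b=\dim(V\cap W^\perp)$, $c=$ rank of $\langle-,-\rangle$ on $(W\cap\mathbb{F}_q^n)\times(V\cap\mathbb{F}_q^n)$. Choose $x\in GL_n(\mathbb{F}_q)$ such that the $V$ and $W$ components of $x\cdot(W,g,V)$ contain $e_{n-c+1},e_{n-c+2},\dots$, and let $g_0=xgx^{-1}\in GL_{n-c}(\mathbb{F}_q)$. Let $\boldsymbol\mu$ be the type of $g_0$ in $GL_{n-c}(\mathbb{F}_q)$ (for each monic irreducible $r\ne t$, $\boldsymbol\mu(r)$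 is the partition whose number of parts equal to $i$ is the multiplicity of $r^i$ as an elementary divisor of $g_0$); $k$ is the number of parts of $\boldsymbol\mu(t-1)$ and $h$ the number of parts of $\boldsymbol\mu(t-1)$ equal to $1$. *)

(* Defs.v *)
From HB Require Import structures.
From mathcomp Require Import all_boot all_order all_algebra.
Set Implicit Arguments. Unset Strict Implicit. Unset Printing Implicit Defensive.
Import GRing.Theory.
Local Open Scope ring_scope.

(* Conventions: vectors of F^n are row vectors 'rV[F]_n; a subspace of F^n is
   the row space of a square matrix (mxalgebra).  The column-vector action
   v |-> g v of the paper is v |-> v *m g^T on row vectors, and the pairing
   <w,v> is w *m v^T. *)

Section Defs.
Variable F : fieldType.

(* a = dim (W ∩ V^perp),  b = dim (V ∩ W^perp),  c = rank of <-,-> on W x V *)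
Definition bt_a n (W V : 'M[F]_n) : nat := \rank (W :&: kermx V^T)%MS.
Definition bt_b n (W V : 'M[F]_n) : nat := \rank (V :&: kermx W^T)%MS.
Definition bt_c n (W V : 'M[F]_n) : nat := \rank (W *m V^T).

Definition bt_g0 n (c : nat) (x g : 'M[F]_n) : 'M[F]_(n - c) :=
  \matrix_(i < n - c, j < n - c)
     (x *m g *m invmx x) (widen_ord (leq_subr c n) i) (widen_ord (leq_subr c n) j).

Fixpoint blkdiag_companion (s : seq {poly F}) : {d : nat & 'M[F]_d} :=
  match s with
  | [::] => existT (fun d => 'M[F]_d) 0%N (0 : 'M[F]_0)
  | p :: s' =>
      let D := blkdiag_companion s' in
      existT (fun d => 'M[F]_d) ((size p).-1 + projT1 D)%N
        (block_mx (companionmx p) 0 0 (projT2 D))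
  end.

(* [s] is a list of elementary divisors of A : each entry (r, i) stands for
   the elementary divisor r^i (r monic irreducible, i >= 1), and A is similar
   to the block diagonal sum of the companion matrices of the r^i. *)
Definition elementary_divisors m (A : 'M[F]_m) (s : seq ({poly F} * nat)) : Prop :=
  (forall ri, ri \in s -> [/\ ri.1 \is monic, irreducible_poly ri.1 & (0 < ri.2)%N])
  /\ let D := blkdiag_companion [seq ri.1 ^+ ri.2 | ri <- s] in
     exists (P : 'M[F]_(m, projT1 D)) (Q : 'M[F]_(projT1 D, m)),
       [/\ P *m Q = 1%:M, Q *m P = 1%:M & A = P *m projT2 D *m Q].

(* k = number of parts of mu(t-1),  h = number of parts of mu(t-1) equal to 1 *)
Definition type_k (s : seq ({poly F} * nat)) : nat :=
  count (fun ri => ri.1 == 'X - 1) s.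
Definition type_h (s : seq ({poly F} * nat)) : nat :=
  count (fun ri => (ri.1 == 'X - 1) && (ri.2 == 1%N)) s.

End Defs.

(* Main.v *)
Require Import Defs.
From HB Require Import structures.
From mathcomp Require Import all_boot all_order all_algebra all_fingroup all_field.
From mathcomp Require Import zify.
Set Implicit Arguments. Unset Strict Implicit. Unset Printing Implicit Defensive.
Import GRing.Theory.
Local Open Scope ring_scope.

Section Helpers.
Variable F : fieldType.

Lemma rank_mxsub m n m' n' (f : 'I_m' -> 'I_m) (g : 'I_n' -> 'I_n) (A : 'M[F]_(m, n)) :
  (\rank (mxsub f g A) <= \rank A)%N.
Proof.
rewrite mxsubrc; apply: leq_trans (mxrankS (rowsub_sub _ _)) _.
by rewrite -[A in colsub _ A]mulmx1 -mulmx_colsub mxrankM_maxl.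
Qed.

Lemma rank_shift d (X : 'M[F]_d) :
  (forall i j : 'I_d, (i.+1 < d)%N -> X i j = (i.+1 == j)%:R - (i == j)%:R) ->
  (d.-1 <= \rank X)%N.
Proof.
case: d X => [|d] X H //=.
pose S : 'M[F]_d := mxsub (widen_ord (leqnSn d)) (lift ord0) X.
apply: leq_trans (rank_mxsub (widen_ord (leqnSn d)) (lift ord0) X).
have SE (i j : 'I_d) : S i j = (i == j)%:R - (i == j.+1 :> nat)%:R.
  rewrite /S mxE H /=; last by rewrite ltnS.
  by rewrite -!val_eqE /= /bump leq0n add1n eqSS.
have trS : is_trig_mx S.
  apply/is_trig_mxP => i j lt_ij; rewrite SE.
  have -> : (i == j) = false by apply/negbTE; rewrite neq_ltn lt_ij.
  have -> : (i == j.+1 :> nat) = false.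
    by apply/negbTE; rewrite neq_ltn (ltn_trans lt_ij (ltnSn _)).
  by rewrite subrr.
have : S \in unitmx.
  rewrite unitmxE (det_trig trS) big1 ?unitr1 // => i _.
  by rewrite SE eqxx eq_sym (gtn_eqF (ltnSn _)) subr0.
move/mxrank_unit => rS; by rewrite -/S rS.
Qed.

Lemma comp_rank1 (p : {poly F}) :
  ((size p).-1.-1 <= \rank (companionmx p - 1%:M)%R)%N.
Proof.
apply: rank_shift => i j hi; rewrite !mxE.
have -> : (i == (size p).-1.-1 :> nat) = false.
  by apply/negbTE; rewrite neq_ltn -ltnS prednK ?hi // (leq_ltn_trans _ hi).
by [].
Qed.

Lemma comp_rank2 (p : {poly F}) :
  ((size p).-1 <= \rank ((companionmx p - 1%:M) *m (companionmx p - 1%:M))%R + 2)%N.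
Proof.
have h1 := comp_rank1 p.
have h2 := mxrank_mul_min (companionmx p - 1%:M) (companionmx p - 1%:M).
move: h1 h2; set r := \rank _; set r2 := \rank _; set d := (size p).-1.
move=> h1 h2; lia.
Qed.

Lemma comp_unit (r : {poly F}) (i : nat) :
  r \is monic -> irreducible_poly r -> r != 'X - 1 ->
  (companionmx (r ^+ i) - 1%:M) \in unitmx.
Proof.
move=> mr ir neq.
set C := companionmx (r ^+ i).
apply/negPn/negP => nu.
have ev : eigenvalue C 1.
  rewrite /eigenvalue /eigenspace; apply/negP => /eqP k0.
  move: nu; rewrite -row_free_unit /row_free => /negP; apply.
  have := mxrank_ker (C - 1%:M); rewrite k0 mxrank0 => /esym/eqP.
  rewrite subn_eq0 => h; rewrite eqn_leq rank_leq_row h //.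
move: ev; rewrite eigenvalue_root_char /C companionmxK ?monic_exp //.
rewrite /root horner_exp expf_eq0 => /andP[_ r1].
have : ('X - 1%:P) %| r by rewrite dvdp_XsubCl.
case/(irredp_XsubCP ir) => [/eqp_size|].
  by rewrite size_XsubC size_poly1.
rewrite eqp_monic ?monicXsubC // => /eqP e.
by move: neq; rewrite -e polyC1 eqxx.
Qed.

Lemma elem_bound (r : {poly F}) (i : nat) :
  r \is monic -> irreducible_poly r -> (0 < i)%N ->
  ((size (r ^+ i)).-1 + ((r == ('X - 1)%R) && (i == 1%N))
    <= \rank ((companionmx (r ^+ i) - 1%:M) *m (companionmx (r ^+ i) - 1%:M))%R
       + 2 * (r == ('X - 1)%R))%N.
Proof.
move=> mr ir ipos.
have [rE|rN] := eqVneq r ('X - 1).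
  have [i1|i1] := eqVneq i 1%N.
    have sz : size r = 2%N by rewrite rE -polyC1 size_XsubC.
    have e : (r == 'X - 1) = true by apply/eqP.
    rewrite i1 expr1 /=; apply: (@leq_trans 2%N); first by rewrite sz.
    by rewrite leq_addl.
  have := comp_rank2 (r ^+ i); rewrite /=; lia.
rewrite /= mxrank_unit ?unitmx_mul ?comp_unit //; lia.
Qed.

Lemma blk_rank (s : seq ({poly F} * nat)) :
  (forall ri, ri \in s -> [/\ ri.1 \is monic, irreducible_poly ri.1 & (0 < ri.2)%N]) ->
  let D := blkdiag_companion [seq ri.1 ^+ ri.2 | ri <- s] in
  (projT1 D + type_h s <= \rank ((projT2 D - 1%:M) *m (projT2 D - 1%:M))%R + 2 * type_k s)%N.
Proof.
elim: s => [|[r i] s IH] Hs /=; first by rewrite addn0.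
have [mr ir ip] := Hs (r, i) (mem_head _ _).
have IH' := IH (fun ri h => Hs ri (ltac:(by rewrite inE h orbT))).
move: IH'; set D := blkdiag_companion _ => IH'.
rewrite [X in (X - _)]/= scalar_mx_block opp_block_mx add_block_mx !oppr0 !addr0.
rewrite mulmx_block !mulmx0 !mul0mx !addr0 !add0r rank_diag_block_mx.
have := elem_bound mr ir ip; move: IH' => /= IH'.
move: (\rank (_ *m (projT2 D - _))) IH' => R2 IH'.
move: (\rank (_ *m (companionmx _ - _))) => R1.
case: (r == _); case: (i == _); rewrite /=; lia.
Qed.

Lemma main_rank n (W V g : 'M[F]_n) :
  (forall v : 'rV[F]_n, (v <= V)%MS -> v *m g^T = v) ->
  (forall w : 'rV[F]_n, (w <= W)%MS -> w *m g = w) ->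
  (\rank ((g - 1%:M) *m (g - 1%:M))%R + bt_a W V + bt_b W V + bt_c W V <= n)%N.
Proof.
move=> Hv Hw.
set B := (g - 1%:M)%R.
have WB : W *m B = 0.
  apply/row_matrixP => i; rewrite row_mul mulmxBr mulmx1 row0.
  by rewrite (Hw _ (row_sub i W)) subrr.
have BT : B^T = (g^T - 1%:M)%R by rewrite /B linearB /= trmx1.
have VB : V *m B^T = 0.
  apply/row_matrixP => i; rewrite row_mul BT mulmxBr mulmx1 row0.
  by rewrite (Hv _ (row_sub i V)) subrr.
set K := kermx W^T.
have BK : (B^T <= K)%MS by rewrite sub_kermx -trmx_mul WB trmx0.
have e0 : \rank (B *m B) = \rank (B^T *m B^T) by rewrite -trmx_mul mxrank_tr.
have h1 : (\rank (B^T *m B^T) <= \rank (K *m B^T))%N by apply: mxrankS; apply: submxMr.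
have h2 := mxrank_mul_ker K B^T.
have h3 : (bt_b W V <= \rank (K :&: kermx B^T))%N.
  apply: mxrankS; rewrite sub_capmx capmxSr /=.
  by apply: submx_trans (capmxSl _ _) _; rewrite sub_kermx VB.
have h4 : \rank K = (n - \rank W)%N by rewrite mxrank_ker mxrank_tr.
have h5 := mxrank_mul_ker W V^T.
have h6 : (\rank W <= n)%N by apply: rank_leq_col.
rewrite /bt_a /bt_c; lia.
Qed.

Lemma VB_lem n (V g : 'M[F]_n) :
  (forall v : 'rV[F]_n, (v <= V)%MS -> v *m g^T = v) ->
  V *m (g - 1%:M)^T = 0.
Proof.
move=> Hv; have BT : (g - 1%:M)^T = (g^T - 1%:M)%R by rewrite linearB /= trmx1.
apply/row_matrixP => i; rewrite row_mul BT mulmxBr mulmx1 row0.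
by rewrite (Hv _ (row_sub i V)) subrr.
Qed.

Lemma conj_rank n (x Y : 'M[F]_n) : (\rank (x *m Y *m invmx x) <= \rank Y)%N.
Proof. exact: leq_trans (mxrankM_maxl _ _) (mxrankM_maxr _ _). Qed.

Lemma col_zero n (V g x : 'M[F]_n) (j : 'I_n) :
  (forall v : 'rV[F]_n, (v <= V)%MS -> v *m g^T = v) -> x \in unitmx ->
  ((delta_mx 0 j : 'rV[F]_n) <= V *m x^T)%MS ->
  forall i, (x *m g *m invmx x - 1%:M)%R i j = 0.
Proof.
move=> Hv ux /submxP[u hu] i.
have NE : (x *m g *m invmx x - 1%:M)%R = x *m (g - 1%:M) *m invmx x.
  by rewrite mulmxBr mulmxBl mulmx1 mulmxV.
have : (delta_mx 0 j : 'rV[F]_n) *m (x *m g *m invmx x - 1%:M)%R^T = 0.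
  rewrite NE hu !trmx_mul !mulmxA -(mulmxA _ x^T) -trmx_mul mulVmx // trmx1 mulmx1.
  by rewrite -(mulmxA u) (VB_lem Hv) mulmx0 mul0mx.
by rewrite -rowE => /rowP /(_ i); rewrite !mxE.
Qed.

Lemma g0_sq n c (x g : 'M[F]_n) :
  (forall j : 'I_n, (n - c <= j)%N -> forall i, (x *m g *m invmx x - 1%:M)%R i j = 0) ->
  ((bt_g0 c x g - 1%:M) *m (bt_g0 c x g - 1%:M))%R =
  mxsub (widen_ord (leq_subr c n)) (widen_ord (leq_subr c n))
    ((x *m g *m invmx x - 1%:M) *m (x *m g *m invmx x - 1%:M))%R.
Proof.
move=> Hz; set N := (x *m g *m invmx x - 1%:M)%R.
set w := widen_ord (leq_subr c n).
have GE (i k : 'I_(n - c)) : (bt_g0 c x g - 1%:M)%R i k = N (w i) (w k).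
  by rewrite /N !mxE.
apply/matrixP => i j; rewrite !mxE.
rewrite (bigID (fun k : 'I_n => (k < n - c)%N)) /=.
rewrite [X in _ = _ + X]big1 ?addr0; last first.
  by move=> k; rewrite -leqNgt => /Hz ->; rewrite mul0r.
rewrite (big_ord_narrow (leq_subr c n)); apply: eq_bigr => k _.
by rewrite !GE.
Qed.

End Helpers.

Theorem proposition5p5 (F : finFieldType) (n : nat) (W V g : 'M[F]_n) :
  g \in unitmx ->
  (* g acts as the identity on V *)
  (forall v : 'rV[F]_n, (v <= V)%MS -> v *m g^T = v) ->
  (* g^T acts as the identity on W *)
  (forall w : 'rV[F]_n, (w <= W)%MS -> w *m g = w) ->
  forall x : 'M[F]_n, x \in unitmx ->
  (* x V and x^{-T} W contain e_{n-c+1}, ..., e_n *)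
  (forall i : 'I_n, (n - bt_c W V <= i)%N ->
      ((delta_mx 0 i : 'rV[F]_n) <= V *m x^T)%MS /\ ((delta_mx 0 i : 'rV[F]_n) <= W *m invmx x)%MS) ->
  forall s : seq ({poly F} * nat),
  elementary_divisors (bt_g0 (bt_c W V) x g) s ->
  (bt_a W V + bt_b W V + type_h s <= 2 * type_k s)%N.
Proof.
move=> ug Hv Hw x ux Hx s [Hs [P [Q [PQ QP g0E]]]].
set c := bt_c W V.
have Hz : forall j : 'I_n, (n - c <= j)%N -> forall i,
    (x *m g *m invmx x - 1%:M)%R i j = 0.
  by move=> j hj; apply: col_zero Hv ux (proj1 (Hx j hj)).
have hG := g0_sq Hz.
set G := bt_g0 c x g in g0E hG.
have hblk := blk_rank Hs.
move: hblk; set D := blkdiag_companion _ => hblk.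
set DD := projT2 D in g0E hblk.
have e1 : (G - 1%:M)%R = P *m (DD - 1%:M)%R *m Q.
  by rewrite mulmxBr mulmxBl mulmx1 PQ g0E.
have e2 : ((DD - 1%:M) *m (DD - 1%:M))%R = Q *m ((G - 1%:M) *m (G - 1%:M))%R *m P.
  rewrite e1 !mulmxA QP mul1mx -(mulmxA (DD - 1%:M) Q P) QP mulmx1.
  by rewrite -(mulmxA _ Q P) QP mulmx1.
have r1 : (\rank ((DD - 1%:M) *m (DD - 1%:M))%R <= \rank ((G - 1%:M) *m (G - 1%:M))%R)%N.
  by rewrite e2; apply: leq_trans (mxrankM_maxl _ _) (mxrankM_maxr _ _).
have r2 : (\rank ((G - 1%:M) *m (G - 1%:M))%R <=
   \rank ((x *m g *m invmx x - 1%:M) *m (x *m g *m invmx x - 1%:M))%R)%N.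
  by rewrite hG rank_mxsub.
have NE : (x *m g *m invmx x - 1%:M)%R = x *m (g - 1%:M) *m invmx x.
  by rewrite mulmxBr mulmxBl mulmx1 mulmxV.
have NNE : ((x *m g *m invmx x - 1%:M) *m (x *m g *m invmx x - 1%:M))%R =
    x *m ((g - 1%:M) *m (g - 1%:M))%R *m invmx x.
  rewrite NE !mulmxA -(mulmxA _ (invmx x) x) mulVmx // mulmx1.
  by rewrite -!mulmxA.
have r3 := conj_rank x ((g - 1%:M) *m (g - 1%:M))%R.
rewrite -NNE in r3.
have r4 := main_rank Hv Hw.
have r5 : (n - c <= projT1 D)%N.
  rewrite -[X in (X <= _)%N](mxrank1 F (n - c)) -PQ.
  by apply: leq_trans (mxrankM_maxr _ _) (rank_leq_row _).
have r6 : (c <= n)%N by apply: rank_leq_row.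
have hb : (projT1 D + type_h s <= \rank ((DD - 1%:M) *m (DD - 1%:M))%R + 2 * type_k s)%N := hblk.
move: hb r1 r2 r3 r4 r5 r6; rewrite -/c.
move: (\rank (_ *m (DD - _))) => R1.
move: (\rank (_ *m (G - _))) => R2.
move: (\rank (_ *m (x *m g *m invmx x - _))) => R3.
move: (\rank (_ *m (g - _))) => R4.
lia.
Qed.
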